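(* Let $N\ge2$, $z=(z_1,\dots,z_N)\in\mathcal P_d^N$, and let $x=(x^i_j)_{1\le j\le i\le N}$ be any critical point of $\Phi^N$ restricted to the set of height-$N$ triangular arrays with $N$-th row equal to $z$ (viewed as a function of the free variables $x^i_j$, $1\le j\le i\le N-1$). Set $p_i=|x^i_1\cdots x^i_i|$. Then $$p_1=p_2^{1/2}=\dots=p_{N-1}^{1/(N-1)}=p_N^{1/N}=|z_1\cdots z_N|^{1/N}.$$
   Context: $\mathcal P_d$: $d\times d$ real symmetric positive definite matrices (an open subset of the space of symmetric matrices); $|\cdot|$ determinant. For a height-$N$ triangular array $x=(x^i_j)_{1\le j\le i\le N}$ with $x^i_j\in\mathcal P_d$, $\Phi^N(x)=\sum_{i=1}^{N-1}\sum_{j=1}^i\big(\operatorname{tr}[x^{i+1}_{j+1}(x^i_j)^{-1}]+\operatorname{tr}[x^i_j(x^{i+1}_j)^{-1}]\big)$. *)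

(* Defs.v *)
From HB Require Import structures.
From mathcomp Require Import all_boot all_order all_algebra.
From mathcomp Require Import all_classical all_reals all_analysis.
Set Implicit Arguments. Unset Strict Implicit. Unset Printing Implicit Defensive.
Import Order.TTheory GRing.Theory Num.Theory.
Local Open Scope ring_scope.

Definition posdef (R : realType) (d : nat) (A : 'M[R]_d) : Prop :=
  A^T = A /\ forall v : 'cV[R]_d, v != 0 -> 0 < (v^T *m A *m v) 0 0.

(* A height-N triangular array x = (x^i_j), 1 <= j <= i <= N, is encoded as a
   function nat -> nat -> 'M_d (1-based indices; only entries with
   1 <= j <= i <= N are meaningful). *)
Definition tri_array (R : realType) (d : nat) := nat -> nat -> 'M[R]_d.

Definition PhiN (R : realType) (d N : nat) (x : tri_array R d) : R :=
  \sum_(1 <= i < N) \sum_(1 <= j < i.+1)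
     (\tr (x i.+1 j.+1 *m invmx (x i j)) + \tr (x i j *m invmx (x i.+1 j))).

Definition perturb (R : realType) (d : nat) (x : tri_array R d)
  (i j : nat) (H : 'M[R]_d) (t : R) : tri_array R d :=
  fun i' j' => if (i' == i) && (j' == j) then x i j + t *: H else x i' j'.

(* x is a critical point of Phi^N restricted to arrays with fixed N-th row:
   the differential w.r.t. every free variable x^i_j (1 <= j <= i <= N-1),
   a point of the open set P_d of the space of symmetric matrices, vanishes,
   i.e. every directional derivative along a symmetric direction H is 0. *)
Definition critical_fixed_row (R : realType) (d N : nat) (x : tri_array R d) : Prop :=
  forall i j : nat, (1 <= j)%N -> (j <= i)%N -> (i <= N.-1)%N ->
  forall H : 'M[R]_d, H^T = H ->
    is_derive (0 : R) (1 : R) (fun t : R => PhiN N (perturb x i j H t)) 0.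

(* Main.v *)
Require Import Defs.
From HB Require Import structures.
From mathcomp Require Import all_boot all_order all_algebra.
From mathcomp Require Import all_classical all_reals all_analysis.
Import Order.TTheory GRing.Theory Num.Theory.
Local Open Scope ring_scope.
From mathcomp Require Import ring zify.

Module Helpers.
Local Set Implicit Arguments.
Local Unset Strict Implicit.
Local Unset Printing Implicit Defensive.
Import numFieldNormedType.Exports.
Local Open Scope classical_set_scope.
Local Open Scope ring_scope.

Section Cont.
Variable R : realType.
Variable (T : Type) (F : set_system T) (FF : ProperFilter F).

Lemma cvg_bsum (I : Type) (r : seq I) (P : pred I) (f : I -> T -> R) (l : I -> R) :
  (forall i, P i -> f i @ F --> l i) ->
  (fun x => \sum_(i <- r | P i) f i x) @ F --> \sum_(i <- r | P i) l i.
Proof.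
move=> H; elim: r => [|a r IH].
  rewrite big_nil; under eq_fun do rewrite big_nil; exact: cvg_cst.
rewrite big_cons; under eq_fun do rewrite big_cons.
case: (boolP (P a)) => Pa; last exact: IH.
exact: (cvgD (H a Pa) IH).
Qed.

Lemma cvg_bprod (I : Type) (r : seq I) (P : pred I) (f : I -> T -> R) (l : I -> R) :
  (forall i, P i -> f i @ F --> l i) ->
  (fun x => \prod_(i <- r | P i) f i x) @ F --> \prod_(i <- r | P i) l i.
Proof.
move=> H; elim: r => [|a r IH].
  rewrite big_nil; under eq_fun do rewrite big_nil; exact: cvg_cst.
rewrite big_cons; under eq_fun do rewrite big_cons.
case: (boolP (P a)) => Pa; last exact: IH.
exact: (cvgM (H a Pa) IH).
Qed.

Lemma cvg_det n (M : T -> 'M[R]_n) (L : 'M[R]_n) :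
  (forall i j, (fun x => M x i j) @ F --> L i j) ->
  (fun x => \det (M x)) @ F --> \det L.
Proof.
move=> H; rewrite /determinant.
apply: cvg_bsum => s _.
apply: cvgM; first exact: cvg_cst.
apply: cvg_bprod => i _; exact: H.
Qed.

End Cont.

Section Inv.
Variable R : realType.
Variable (T : Type) (F : set_system T) (FF : ProperFilter F).

Lemma cvg_invmx n (M : T -> 'M[R]_n) (L : 'M[R]_n) :
  L \in unitmx ->
  (forall i j, (fun x => M x i j) @ F --> L i j) ->
  forall i j, (fun x => invmx (M x) i j) @ F --> invmx L i j.
Proof.
move=> uL H i j.
have cd := cvg_det FF H.
have dL : \det L != 0 by rewrite -unitfE -unitmxE.
have nd : \forall x \near F, \det (M x) != 0.
  by apply: cvgr_neq0 dL; exact: cd.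
have -> : invmx L i j = (\det L)^-1 * cofactor L j i.
  by rewrite /invmx uL !mxE.
apply: (@cvg_trans _ ((fun x => (\det (M x))^-1 * cofactor (M x) j i) @ F)).
  apply: near_eq_cvg; near=> x; rewrite /invmx unitmxE unitfE.
  have -> : \det (M x) != 0 by near: x.
  by rewrite !mxE.
apply: cvgM; first exact: cvgV.
apply: cvgM; first exact: cvg_cst.
apply: cvg_det => a b; rewrite mxE.
under eq_fun do rewrite !mxE.
rewrite mxE; exact: H.
Unshelve. all: by end_near. Qed.

End Inv.

Section Lin.
Variable R : realType.

Lemma is_derive_lin (f g : R -> R) :
  (\forall t \near 0, f t = f 0 + t * g t) ->
  g t @[t --> 0] --> g 0 ->
  is_derive (0:R) (1:R) f (g 0).
Proof.
move=> Hf Hg.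
have Hq : (fun h : R => h^-1 *: ((f \o shift 0) (h *: 1) - f 0)) @ 0^' --> g 0.
  apply: (@cvg_trans _ (g @ 0^')).
    apply: near_eq_cvg; near=> h.
    rewrite /= /shift addr0 scaler1.
    have -> : f h = f 0 + h * g h by near: h; exact: (@cvg_within _ (nbhs (0:R)) _ _ _ Hf).
    have hn0 : h != 0 by near: h; exact: nbhs_dnbhs_neq.
    by rewrite addrC addKr /GRing.scale /= mulrA mulVf // mul1r.
  apply: (cvg_trans _ Hg); apply: cvg_app; exact: cvg_within.
split; first by apply/cvg_ex; exists (g 0).
exact: cvg_lim.
Unshelve. all: by end_near. Qed.

End Lin.

Section Term.
Variable R : realType.

Lemma cvg_tr_mul (T : Type) (F : set_system T) (FF : ProperFilter F) n
  (A : 'M[R]_n) (B : T -> 'M[R]_n) (L : 'M[R]_n) :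
  (forall i j, (fun x => B x i j) @ F --> L i j) ->
  (fun x => \tr (A *m B x)) @ F --> \tr (A *m L).
Proof.
move=> H; rewrite /mxtrace; under eq_fun do under eq_bigr do rewrite mxE.
under eq_bigr do rewrite mxE.
apply: cvg_bsum => i _; apply: cvg_bsum => k _.
apply: cvgM; [exact: cvg_cst | exact: H].
Qed.

Lemma cvg_affmx n (Q H : 'M[R]_n) i j :
  (fun t : R => (Q + t *: H) i j) @ (nbhs (0:R)) --> Q i j.
Proof.
under eq_fun do rewrite !mxE.
have K : (fun t : R => Q i j + t * H i j) @ nbhs (0:R) --> Q i j + 0 * H i j.
  exact: (cvgD (cvg_cst (Q i j)) (cvgM cvg_id (cvg_cst (H i j)))).
by rewrite mul0r addr0 in K.
Qed.

Lemma is_derive_term n (P Q H1 H2 : 'M[R]_n) : Q \in unitmx ->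
  is_derive (0:R) (1:R) (fun t => \tr ((P + t *: H1) *m invmx (Q + t *: H2)))
    (\tr (H1 *m invmx Q) - \tr (P *m invmx Q *m H2 *m invmx Q)).
Proof.
move=> uQ.
pose g t := \tr (H1 *m invmx (Q + t *: H2)) - \tr ((P *m invmx Q *m H2) *m invmx (Q + t *: H2)).
have g0 : g 0 = \tr (H1 *m invmx Q) - \tr (P *m invmx Q *m H2 *m invmx Q).
  by rewrite /g scale0r addr0.
have cinv := @cvg_invmx R R (nbhs (0:R)) _ n _ _ uQ (@cvg_affmx n Q H2).
rewrite -g0; apply: is_derive_lin.
- 
  have cd : (fun t : R => \det (Q + t *: H2)) @ (nbhs (0:R)) --> \det Q.
    exact: cvg_det (@cvg_affmx n Q H2).
  have dQ : \det Q != 0 by rewrite -unitfE -unitmxE.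
  have nd : \forall t \near (nbhs (0:R)), \det (Q + t *: H2) != 0.
    by apply: cvgr_neq0 dQ; exact: cd.
  near=> t.
  have uQt : Q + t *: H2 \in unitmx.
    by rewrite unitmxE unitfE; near: t.
  have E : invmx (Q + t *: H2) = invmx Q - t *: (invmx Q *m H2 *m invmx (Q + t *: H2)).
    have K : invmx Q = invmx Q *m (Q + t *: H2) *m invmx (Q + t *: H2).
      by rewrite -mulmxA mulmxV // mulmx1.
    rewrite {1}K mulmxDr mulmxDl mulVmx // mul1mx.
    have -> : invmx Q *m (t *: H2) *m invmx (Q + t *: H2) = t *: (invmx Q *m H2 *m invmx (Q + t *: H2)).
      by rewrite -scalemxAr -scalemxAl.
    by rewrite addrK.
  rewrite /g !scale0r !addr0 mulmxDl mxtraceD {1}E mulmxBr raddfB /=.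
  rewrite -scalemxAl -scalemxAr !mxtraceZ !mulmxA.
  ring.
- rewrite g0 /g; apply: cvgB; apply: (cvg_tr_mul (nbhs_pfilter (0:R))) => i j; exact: cinv.
Unshelve. all: by end_near. Qed.

End Term.

Section E.
Variable R : realType.

Lemma is_derive_bsum (I : eqType) (r : seq I) (f : I -> R -> R) (D : I -> R) :
  (forall i, i \in r -> is_derive (0:R) (1:R) (f i) (D i)) ->
  is_derive (0:R) (1:R) (fun t => \sum_(i <- r) f i t) (\sum_(i <- r) D i).
Proof.
elim: r => [|a r IH] H.
  rewrite big_nil.
  have -> : (fun t : R => \sum_(i <- [::]) f i t) = cst 0.
    by apply: funext => t; rewrite big_nil.
  exact: is_derive_cst.
rewrite big_cons.
have -> : (fun t : R => \sum_(i <- (a :: r)) f i t) = f a + (fun t => \sum_(i <- r) f i t).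
  by apply: funext => t; rewrite big_cons.
apply: is_deriveD; first by apply: H; rewrite inE eqxx.
by apply: IH => i ir; apply: H; rewrite inE ir orbT.
Qed.

Lemma sum_sel1 (m n k : nat) (G : nat -> R) :
  \sum_(m <= a < n) (if a == k then G a else 0) = if (m <= k < n)%N then G k else 0.
Proof.
case: ifP => Hk.
  rewrite (bigD1_seq k) /=; last exact: iota_uniq.
    rewrite eqxx big1_seq ?addr0 // => a /andP [/negbTE -> _] //.
  by rewrite mem_index_iota.
rewrite big1_seq // => a /andP [_]; rewrite mem_index_iota => Ha.
case: eqP => // E; subst a; by rewrite Ha in Hk.
Qed.

Lemma sum_sel (N i0 j0 : nat) (c : nat -> nat -> bool) (F : nat -> nat -> R) :
  (forall a b, c a b = (a == i0) && (b == j0)) ->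
  \sum_(1 <= a < N) \sum_(1 <= b < a.+1) (if c a b then F a b else 0)
  = if (1 <= i0 < N)%N && (1 <= j0 < i0.+1)%N then F i0 j0 else 0.
Proof.
move=> Hc.
rewrite (eq_bigr (fun a => if a == i0 then
   \sum_(1 <= b < a.+1) (if b == j0 then F a b else 0) else 0)); last first.
  move=> a _; case: eqP => [->|Ha].
    by apply: eq_bigr => b _; rewrite Hc eqxx.
  by rewrite big1 // => b _; rewrite Hc; case: eqP.
rewrite sum_sel1 sum_sel1.
by case: (1 <= i0 < N)%N.
Qed.

Lemma trHl n (c : bool) (H B : 'M[R]_n) :
  \tr ((if c then H else 0) *m B) = if c then \tr (H *m B) else 0.
Proof. by case: c; rewrite ?mul0mx ?mxtrace0. Qed.

Lemma trHm n (c : bool) (A H B : 'M[R]_n) :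
  \tr (A *m (if c then H else 0) *m B) = if c then \tr (A *m H *m B) else 0.
Proof. by case: c; rewrite ?mulmx0 ?mul0mx ?mxtrace0. Qed.

Lemma telesc (i : nat) (d U V w : nat -> R) : (1 <= i)%N -> w 1%N = 1 -> w i.+1 = 1 ->
  (forall j, (1 <= j <= i)%N -> d j ^+ 2 * w j =
     w j.+1 * U j * (if (1 < j)%N then V j.-1 else 1) * (if j == i then U i.+1 else 1)) ->
  (\prod_(1 <= j < i.+1) d j) ^+ 2 = \prod_(1 <= j < i.+2) U j * \prod_(1 <= j < i) V j.
Proof.
move=> i1 w1 wi H.
have K : forall k, (k <= i)%N -> (\prod_(1 <= j < k.+1) d j) ^+ 2 =
  w k.+1 * (\prod_(1 <= j < k.+1) U j * \prod_(1 <= j < k) V j *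
            \prod_(1 <= j < k.+1) (if j == i then U i.+1 else 1)).
  elim=> [|k IH] Hk.
    rewrite !big_geq // w1; ring.
  rewrite big_nat_recr //= exprMn IH; last by lia.
  transitivity ((\prod_(1 <= j < k.+1) U j * \prod_(1 <= j < k) V j *
     \prod_(1 <= j < k.+1) (if j == i then U i.+1 else 1)) * (d k.+1 ^+ 2 * w k.+1)).
    ring.
  rewrite H; last by lia.
  rewrite !(big_nat_recr k.+1) //=.
  case: k IH Hk => [|k] IH Hk.
    rewrite /= !big_geq //; ring.
  rewrite [\prod_(1 <= j < k.+2) V j]big_nat_recr //=; ring.
rewrite K // wi mul1r.
rewrite [\prod_(1 <= j < i.+1) (if j == i then _ else _)]big_nat_recr //= eqxx.
rewrite [\prod_(1 <= j < i) (if j == i then _ else _)]big1_seq ?mul1r; last first.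
  by move=> j /andP [_]; rewrite mem_index_iota => /andP [_ Hj]; rewrite ltn_eqF.
rewrite (big_nat_recr i.+1) //=.
ring.
Qed.

End E.

Section F.
Variable R : realType.

Lemma geom (N : nat) (P : nat -> R) : P 0%N = 1 ->
  (forall i, (1 <= i <= N.-1)%N -> P i ^+ 2 = P i.+1 * P i.-1) ->
  (forall i, (i <= N)%N -> P i != 0) ->
  forall i, (i <= N)%N -> P i = P 1%N ^+ i.
Proof.
move=> P0 HP Hn.
have K : forall k, (k.+1 <= N)%N -> P k = P 1%N ^+ k /\ P k.+1 = P 1%N ^+ k.+1.
  elim=> [|k IH] Hk; first by rewrite P0 expr0 expr1.
  have [IH1 IH2] := IH (ltnW Hk).
  split => //.
  have E := HP k.+1 (ltac:(lia)).
  rewrite IH2 /= IH1 in E.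
  apply: (mulIf (Hn k (ltac:(lia)))); rewrite IH1 -E -exprM -exprD.
  congr (_ ^+ _); lia.
case=> [|k] Hk; first by rewrite P0 expr0.
by have [] := K k Hk.
Qed.

Lemma quad_det n (A : 'M[R]_n) :
  (forall v : 'cV[R]_n, v != 0 -> 0 < (v^T *m A *m v) 0 0) -> \det A != 0.
Proof.
move=> H; apply/negP => /det0P [v nv vA].
have : v^T != 0.
  by apply: contra nv => /eqP h; rewrite -(trmxK v) h trmx0.
move=> /H; rewrite trmxK vA mul0mx mxE ltxx //.
Qed.

Lemma posdef_det_neq0 d (A : 'M[R]_d) :
  A^T = A /\ (forall v : 'cV[R]_d, v != 0 -> 0 < (v^T *m A *m v) 0 0) -> \det A != 0.
Proof. by case=> _; exact: quad_det. Qed.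

Lemma cvg_aff (a b t : R) : (fun s : R => a + s * b) @ (nbhs t) --> a + t * b.
Proof. exact: (cvgD (cvg_cst a) (cvgM cvg_id (cvg_cst b))). Qed.

Lemma posdef_det_gt0 d (A : 'M[R]_d) :
  A^T = A /\ (forall v : 'cV[R]_d, v != 0 -> 0 < (v^T *m A *m v) 0 0) -> 0 < \det A.
Proof.
move=> [_ HA].
have dA := quad_det HA.
pose M (t : R) : 'M[R]_d := (1 - t) *: 1%:M + t *: A.
pose f t := \det (M t).
have f0 : f 0 = 1 by rewrite /f /M scale0r addr0 subr0 scale1r det1.
have f1 : f 1 = \det A by rewrite /f /M subrr scale0r add0r scale1r.
rewrite lt_neqAle eq_sym dA /=.
rewrite leNgt; apply/negP => neg.
have cf : continuous f.
  move=> t; apply: (cvg_det (nbhs_pfilter t)) => i j.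
  have -> : (fun x => M x i j) = (fun s => (i == j)%:R + s * (A i j - (i == j)%:R)).
    by apply: funext => s; rewrite /M !mxE; ring.
  have -> : M t i j = (i == j)%:R + t * (A i j - (i == j)%:R).
    by rewrite /M !mxE; ring.
  exact: cvg_aff.
have [c cI fc0] : exists2 c, c \in `[0, 1] & f c = 0.
  apply: IVT => //; first exact: continuous_subspaceT.
  by rewrite f0 f1 ge_min le_max (ltW neg) ler01 !orbT.
have : \det (M c) != 0.
  case: (eqVneq c 0) => [->|cn0].
    by rewrite /M scale0r addr0 subr0 scale1r det1 oner_neq0.
  apply: quad_det => v nv.
  rewrite /M mulmxDr mulmxDl -!scalemxAr -!scalemxAl mulmx1.
  have E : forall (a b : R) (P Q : 'M[R]_1), (a *: P + b *: Q) 0 0 = a * P 0 0 + b * Q 0 0.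
    by move=> a b P Q; rewrite !mxE.
  rewrite E.
  move: cI; rewrite in_itv /= => /andP [c0 c1].
  have vv : 0 <= (v^T *m v) 0 0.
    rewrite mxE; apply: sumr_ge0 => k _; rewrite mxE -expr2; exact: sqr_ge0.
  have vA := HA v nv.
  have c0' : 0 < c by rewrite lt_neqAle eq_sym cn0.
  apply: ltr_wpDl; first by apply: mulr_ge0 => //; rewrite subr_ge0.
  exact: mulr_gt0.
by rewrite /f in fc0; rewrite fc0 eqxx.
Qed.

End F.

Section G.
Variable R : realType.

Lemma tr_sq0 n (M : 'M[R]_n) : M^T = M -> \tr (M *m M) = 0 -> M = 0.
Proof.
move=> sM.
have -> : \tr (M *m M) = \sum_i \sum_k M i k ^+ 2.
  rewrite /mxtrace; apply: eq_bigr => i _; rewrite mxE; apply: eq_bigr => k _.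
  by rewrite -[M k i]/((M k i)) -{2}sM mxE expr2.
move=> S0.
have H1 := psumr_eq0P (fun i _ => sumr_ge0 _ (fun k _ => sqr_ge0 (M i k))) S0.
apply/matrixP => i k; rewrite mxE.
have H2 := psumr_eq0P (fun k _ => sqr_ge0 (M i k)) (H1 i isT).
by have /eqP := H2 k isT; rewrite sqrf_eq0 => /eqP.
Qed.

Lemma cyc n (B Y H : 'M[R]_n) : \tr (B *m Y *m H *m Y) = \tr (Y *m B *m Y *m H).
Proof. by rewrite mxtrace_mulC !mulmxA. Qed.

Lemma split4 N (F1 F2 F3 F4 : nat -> nat -> R) :
  \sum_(1 <= a < N) \sum_(1 <= b < a.+1) ((F1 a b - F2 a b) + (F3 a b - F4 a b)) =
  (\sum_(1 <= a < N) \sum_(1 <= b < a.+1) F1 a b - \sum_(1 <= a < N) \sum_(1 <= b < a.+1) F2 a b) +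
  (\sum_(1 <= a < N) \sum_(1 <= b < a.+1) F3 a b - \sum_(1 <= a < N) \sum_(1 <= b < a.+1) F4 a b).
Proof.
rewrite -!sumrB -big_split; apply: eq_bigr => a _.
by rewrite -!sumrB -big_split.
Qed.

End G.

Section H.
Variable R : realType.

Lemma is_derive_add2 (f g : R -> R) df dg :
  is_derive (0:R) (1:R) f df -> is_derive (0:R) (1:R) g dg ->
  is_derive (0:R) (1:R) (fun t => f t + g t) (df + dg).
Proof. move=> H1 H2; exact: is_deriveD. Qed.

Lemma symM n (A X B : 'M[R]_n) : A^T = A -> X^T = X -> B^T = B ->
  (A - invmx X *m B *m invmx X)^T = A - invmx X *m B *m invmx X.
Proof.
move=> hA hX hB; rewrite linearB /= !trmx_mul trmx_inv hA hX hB mulmxA //.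
Qed.

Lemma crit_eq d N (x : tri_array R d) i j :
  (2 <= N)%N ->
  (forall i j, (1 <= j)%N -> (j <= i)%N -> (i <= N)%N -> posdef (x i j)) ->
  critical_fixed_row N x ->
  (1 <= j)%N -> (j <= i)%N -> (i <= N.-1)%N ->
  invmx (x i.+1 j) + (if (1 < j)%N then invmx (x i.-1 j.-1) else 0)
  - invmx (x i j) *m (x i.+1 j.+1 + (if (j < i)%N then x i.-1 j else 0)) *m invmx (x i j) = 0.
Proof.
move=> N2 Hx Hc j1 ji iN.
have U : forall a b, (1 <= b)%N -> (b <= a)%N -> (a <= N)%N -> x a b \in unitmx.
  move=> a b h1 h2 h3; rewrite unitmxE unitfE; exact: posdef_det_neq0 (Hx a b h1 h2 h3).
have S : forall a b, (1 <= b)%N -> (b <= a)%N -> (a <= N)%N -> (x a b)^T = x a b.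
  by move=> a b h1 h2 h3; case: (Hx a b h1 h2 h3).
set M := (X in X = 0).
have HD : forall H : 'M[R]_d, H^T = H -> \tr (M *m H) = 0.
  move=> H HT.
  pose Hd a b := if (a == i) && (b == j) then H else 0.
  have pe : forall t, perturb x i j H t = fun a b => x a b + t *: Hd a b.
    move=> t; apply: funext => a; apply: funext => b.
    rewrite /perturb /Hd; case: ifP => h1.
    - by case/andP: h1 => /eqP -> /eqP ->.
    - by rewrite scaler0 addr0.
  have D0 := Hc i j j1 ji iN H HT.
  have D1 : is_derive (0:R) (1:R) (fun t => PhiN N (perturb x i j H t))
    (\sum_(1 <= a < N) \sum_(1 <= b < a.+1)
       ((\tr (Hd a.+1 b.+1 *m invmx (x a b)) - \tr (x a.+1 b.+1 *m invmx (x a b) *m Hd a b *m invmx (x a b)))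
      + (\tr (Hd a b *m invmx (x a.+1 b)) - \tr (x a b *m invmx (x a.+1 b) *m Hd a.+1 b *m invmx (x a.+1 b))))).
    have -> : (fun t => PhiN N (perturb x i j H t)) = (fun t => \sum_(1 <= a < N) \sum_(1 <= b < a.+1)
       (\tr ((x a.+1 b.+1 + t *: Hd a.+1 b.+1) *m invmx (x a b + t *: Hd a b)) +
        \tr ((x a b + t *: Hd a b) *m invmx (x a.+1 b + t *: Hd a.+1 b)))).
      by apply: funext => t; rewrite /PhiN pe.
    apply: is_derive_bsum => a; rewrite mem_index_iota => Ha.
    apply: is_derive_bsum => b; rewrite mem_index_iota => Hb.
    apply: is_derive_add2; apply: is_derive_term; apply: U; lia.
  have := @derive_val _ _ _ _ _ _ _ D0.
  rewrite (@derive_val _ _ _ _ _ _ _ D1) => {D0 D1}.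
  rewrite /Hd.
  under eq_bigr do under eq_bigr do rewrite trHl trHm trHl trHm.
  rewrite split4.
  have bq : forall (p q : bool), (p -> q) -> (q -> p) -> p = q.
    by move=> p q h1 h2; apply/idP/idP.
  rewrite (@sum_sel R N i.-1 j.-1 (fun a b => (a.+1 == i) && (b.+1 == j))); last first.
    move=> a b; apply: bq => /andP [/eqP h1 /eqP h2]; apply/andP; split; apply/eqP; lia.
  rewrite (@sum_sel R N i j (fun a b => (a == i) && (b == j))) //.
  rewrite (@sum_sel R N i j (fun a b => (a == i) && (b == j))) //.
  rewrite (@sum_sel R N i.-1 j (fun a b => (a.+1 == i) && (b == j))); last first.
    move=> a b; apply: bq => /andP [/eqP h1 /eqP h2]; apply/andP; split; apply/eqP; lia.
  have -> : (1 <= i < N)%N && (1 <= j < i.+1)%N by apply/andP; split; apply/andP; split; lia.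
  have -> : ((1 <= i.-1 < N)%N && (1 <= j.-1 < i.-1.+1)%N) = (1 < j)%N.
    apply: bq => [/andP [/andP [h1 h2] /andP [h3 h4]]|h]; first lia.
    apply/andP; split; apply/andP; split; lia.
  have -> : ((1 <= i.-1 < N)%N && (1 <= j < i.-1.+1)%N) = (j < i)%N.
    apply: bq => [/andP [/andP [h1 h2] /andP [h3 h4]]|h]; first lia.
    apply/andP; split; apply/andP; split; lia.
  have ei : i.-1.+1 = i by lia.
  have ej : j.-1.+1 = j by lia.
  rewrite ei.
  move=> <-; rewrite /M; case: (1 < j)%N; case: (j < i)%N;
  rewrite ?addr0 ?sub0r ?subr0 ?mulmxBl ?mulmxDr ?mulmxDl ?raddfB /= ?mxtraceD ?(mxtrace_mulC H) ?cyc; ring.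
have sM : M^T = M.
  rewrite /M; apply: symM.
  - case: (boolP (1 < j)%N) => c1; rewrite ?addr0 ?linearD /= !trmx_inv !S //; lia.
  - rewrite S //; lia.
  - case: (boolP (j < i)%N) => c2; rewrite ?addr0 ?linearD /= !S //; lia.
by apply: tr_sq0 => //; apply: HD.
Qed.

End H.

Section M.
Variable R : realType.

Lemma det_bprod d (r : seq nat) (F : nat -> 'M[R]_d) :
  \det (\prod_(j <- r) F j) = \prod_(j <- r) \det (F j).
Proof.
elim: r => [|a r IH]; first by rewrite !big_nil det1.
by rewrite !big_cons -IH -det_mulmx.
Qed.

Lemma row_rel d N (x : tri_array R d) k :
  (2 <= N)%N ->
  (forall i j, (1 <= j)%N -> (j <= i)%N -> (i <= N)%N -> posdef (x i j)) ->
  critical_fixed_row N x ->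
  (1 <= k)%N -> (k <= N.-1)%N ->
  (\prod_(1 <= j < k.+1) \det (x k j)) ^+ 2 =
  \prod_(1 <= j < k.+2) \det (x k.+1 j) * \prod_(1 <= j < k.-1.+1) \det (x k.-1 j).
Proof.
move=> N2 Hx Hc k1 kN.
have Dn : forall a b, (1 <= b)%N -> (b <= a)%N -> (a <= N)%N -> \det (x a b) != 0.
  move=> a b h1 h2 h3; exact: posdef_det_neq0 (Hx a b h1 h2 h3).
have U : forall a b, (1 <= b)%N -> (b <= a)%N -> (a <= N)%N -> x a b \in unitmx.
  by move=> a b h1 h2 h3; rewrite unitmxE unitfE Dn.
have -> : k.-1.+1 = k by lia.
pose w j := if (1 < j <= k)%N then \det (x k.+1 j + x k.-1 j.-1) else 1.
apply: (@telesc R k _ _ _ w) => //.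
  by rewrite /w; case: ifP => //; lia.
move=> j /andP [j1 jk].
have E := subr0_eq (crit_eq N2 Hx Hc j1 jk kN).
set A := (X in X = _) in E; set B := (x k.+1 j.+1 + _) in E.
have uX : x k j \in unitmx by apply: U; lia.
have EB : B = x k j *m A *m x k j.
  by rewrite E !mulmxA mulmxV // mul1mx -mulmxA mulVmx // mulmx1.
have dB : \det B = \det (x k j) ^+ 2 * \det A by rewrite EB !det_mulmx; ring.
have dU : \det (x k.+1 j) != 0 by apply: Dn; lia.
have dBw : \det B = w j.+1 * (if j == k then \det (x k.+1 k.+1) else 1).
  rewrite /B /w; case: (boolP (j < k)%N) => c2.
    rewrite andbT; have -> : (1 < j.+1)%N by lia.
    by rewrite ifN ?mulr1 //; lia.
  rewrite andbF.
  have ejk : j = k by lia.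
  by rewrite addr0 ejk eqxx mul1r.
have wj : w j = if (1 < j)%N then \det (x k.+1 j + x k.-1 j.-1) else 1.
  by rewrite /w; case: (boolP (1 < j)%N) => c1 //=; rewrite jk.
rewrite wj.
transitivity (\det B * \det (x k.+1 j) * (if (1 < j)%N then \det (x k.-1 j.-1) else 1)); last first.
  rewrite dBw; move: (w j.+1) (\det (x k.+1 j)) (if (1 < j)%N then \det (x k.-1 j.-1) else 1) (if j == k then \det (x k.+1 k.+1) else 1) => a1 a2 a3 a4; ring.
rewrite dB /A.
case: (boolP (1 < j)%N) => c1; rewrite ?addr0.
  have dV : \det (x k.-1 j.-1) != 0 by apply: Dn; lia.
  have uU : x k.+1 j \in unitmx by rewrite unitmxE unitfE.
  have uV : x k.-1 j.-1 \in unitmx by rewrite unitmxE unitfE.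
  have -> : invmx (x k.+1 j) + invmx (x k.-1 j.-1) =
            invmx (x k.+1 j) *m (x k.-1 j.-1 + x k.+1 j) *m invmx (x k.-1 j.-1).
    by rewrite mulmxDr mulmxDl mulVmx // mul1mx -mulmxA mulmxV // mulmx1 addrC.
  rewrite !det_mulmx !det_inv addrC.
  by field; apply/andP; split.
rewrite det_inv; field; done.
Qed.

End M.

End Helpers.
Import Helpers.

Theorem mainTheorem9 (R : realType) (d N : nat) (z : nat -> 'M[R]_d)
  (x : tri_array R d) :
  (2 <= N)%N ->
  (forall j, (1 <= j <= N)%N -> posdef (z j)) ->
  (forall i j, (1 <= j)%N -> (j <= i)%N -> (i <= N)%N -> posdef (x i j)) ->
  (forall j, (1 <= j <= N)%N -> x N j = z j) ->
  critical_fixed_row N x ->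
  forall i : nat, (1 <= i <= N)%N ->
    (\det (\prod_(1 <= j < i.+1) x i j)) `^ (i%:R)^-1
    = (\det (\prod_(1 <= j < N.+1) z j)) `^ (N%:R)^-1.
Proof.
move=> N2 Hz Hx HxN Hc i /andP [i1 iN].
pose P k := \prod_(1 <= j < k.+1) \det (x k j).
have PE : forall k, \det (\prod_(1 <= j < k.+1) x k j) = P k.
  by move=> k; rewrite det_bprod.
have -> : \prod_(1 <= j < N.+1) z j = \prod_(1 <= j < N.+1) x N j.
  apply: eq_big_seq => j; rewrite mem_index_iota => hj.
  by rewrite HxN //; lia.
rewrite !PE.
have Pn : forall k, (k <= N)%N -> P k != 0.
  move=> k kN; rewrite /P prodf_seq_neq0; apply/allP => j.
  rewrite mem_index_iota => hj /=; apply: posdef_det_neq0; apply: Hx; lia.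
have P0 : P 0%N = 1 by rewrite /P big_geq.
have Pg := @geom R N P P0.
have Pk : forall k, (k <= N)%N -> P k = P 1%N ^+ k.
  apply: Pg => // k /andP [k1 kN].
  exact: row_rel N2 Hx Hc k1 kN.
have P1 : 0 < P 1%N.
  rewrite /P big_nat1; apply: posdef_det_gt0; apply: Hx => //; lia.
have K : forall k, (1 <= k <= N)%N -> (P 1%N ^+ k) `^ (k%:R)^-1 = P 1%N.
  move=> k /andP [k1 kN].
  rewrite -(powR_mulrn _ (ltW P1)).
  rewrite -powRrM mulfV; first by rewrite powRr1 // ltW.
  by rewrite pnatr_eq0 -lt0n.
rewrite (Pk i iN) (Pk N (leqnn N)) K ?i1 ?iN // K //.
apply/andP; split => //; lia.
Qed.
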